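(* Let $R$ be a commutative multiplicative hyperring with identity, let $\alpha$ be a good endomorphism of $R$, let $I$ be an $\alpha$-prime hyperideal of $R$, and let $S$ be a subset of $R$. Then $(I:S)$ is an $\alpha$-prime hyperideal of $R$.
   Context: A multiplicative hyperring is an abelian group $(R,+)$ with a hyperoperation $\circ:R\times R\to \mathcal P^*(R)$ (nonempty subsets) such that $a\circ(b\circ c)=(a\circ b)\circ c$, $a\circ(b+c)\subseteq a\circ b+a\circ c$, $(b+c)\circ a\subseteq b\circ a+c\circ a$, and $a\circ(-b)=(-a)\circ b=-(a\circ b)$. Products of subsets are unions of elementwise products. Commutative means $a\circ b=b\circ a$. An identity $1$ satisfies $a\in1\circ a$ for all $a$. A hyperideal is a nonempty $I\subseteq R$ closed under subtraction with $r\circ x\subseteq I$ for $r\in R$, $x\in I$. Standing assumption: every hyperideal is a $\mathbf C$-hyperideal, i.e. for every finite product $A=r_1\circ\cdots\circ r_n$, $A\cap I\ne\emptyset$ implies $A\subseteq I$. $(I:S)=\{r\in R: r\circ s\subseteq I \text{ for all } s\in S\}$. A good endomorphism $\alpha$ satisfies $\alpha(x+y)=\alpha(x)+\alpha(y)$ and $\alpha(x\circ y)=\alpha(x)\circ\alpha(y)$. A hyperideal $I$ is $\alpha$-prime if for all $x,y$, $x\circ y\subseteq I$ implies $x\in I$ or $\alpha(y)\in I$; properness is not part of this definition. *)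

(* Defs.v *)
From mathcomp Require Import all_boot all_algebra.
Set Implicit Arguments. Unset Strict Implicit. Unset Printing Implicit Defensive.
Import GRing.Theory.
Local Open Scope ring_scope.

Section Hyper.
Variable R : zmodType.

(* A hyperoperation: mul a b is the subset a o b of R. *)
Definition hop := R -> R -> R -> Prop.

Definition set_eq (A B : R -> Prop) := forall z, A z <-> B z.
Definition subset (A B : R -> Prop) := forall z, A z -> B z.
Definition single (a : R) : R -> Prop := fun z => z = a.

Definition setmul (mul : hop) (A B : R -> Prop) : R -> Prop :=
  fun z => exists a b, A a /\ B b /\ mul a b z.
Definition setadd (A B : R -> Prop) : R -> Prop :=
  fun z => exists a b, A a /\ B b /\ z = a + b.
Definition setopp (A : R -> Prop) : R -> Prop := fun z => A (- z).

Definition is_mult_hyperring (mul : hop) : Prop :=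
  (forall a b, exists z, mul a b z) /\
  (forall a b c, set_eq (setmul mul (single a) (mul b c))
                        (setmul mul (mul a b) (single c))) /\
  (forall a b c, subset (mul a (b + c)) (setadd (mul a b) (mul a c))) /\
  (forall a b c, subset (mul (b + c) a) (setadd (mul b a) (mul c a))) /\
  (forall a b, set_eq (mul a (- b)) (setopp (mul a b))) /\
  (forall a b, set_eq (mul (- a) b) (setopp (mul a b))).

Definition hcommutative (mul : hop) : Prop :=
  forall a b, set_eq (mul a b) (mul b a).

Definition has_identity (mul : hop) : Prop :=
  exists one : R, forall a, mul one a a.

Definition good_endo (mul : hop) (alpha : R -> R) : Prop :=
  (forall x y, alpha (x + y) = alpha x + alpha y) /\
  (forall x y, set_eq (fun z => exists w, mul x y w /\ z = alpha w)
                      (mul (alpha x) (alpha y))).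

Definition hyperideal (mul : hop) (I : R -> Prop) : Prop :=
  (exists x, I x) /\
  (forall x y, I x -> I y -> I (x - y)) /\
  (forall r x, I x -> subset (mul r x) I).

(* finite product r1 o r2 o ... o rn, n >= 1 (left-bracketed) *)
Definition hprod (mul : hop) (r1 : R) (rs : seq R) : R -> Prop :=
  foldl (fun A r => setmul mul A (single r)) (single r1) rs.

Definition C_hyperideal (mul : hop) (I : R -> Prop) : Prop :=
  forall r1 rs, (exists z, hprod mul r1 rs z /\ I z) ->
                subset (hprod mul r1 rs) I.

Definition hcolon (mul : hop) (I S : R -> Prop) : R -> Prop :=
  fun r => forall s, S s -> subset (mul r s) I.

(* alpha-prime (properness not required) *)
Definition alpha_prime (mul : hop) (alpha : R -> R) (I : R -> Prop) : Prop :=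
  forall x y, subset (mul x y) I -> I x \/ I (alpha y).

End Hyper.

(* Main.v *)
Require Import Defs.
From mathcomp Require Import all_boot all_algebra.
From Stdlib Require Import Classical.
Import GRing.Theory.
Local Open Scope ring_scope.

Theorem mainTheorem7 (R : zmodType) (mul : hop R) (alpha : R -> R)
  (I S : R -> Prop) :
  is_mult_hyperring mul ->
  hcommutative mul ->
  has_identity mul ->
  (forall J : R -> Prop, hyperideal mul J -> C_hyperideal mul J) ->
  good_endo mul alpha ->
  hyperideal mul I -> alpha_prime mul alpha I ->
  hyperideal mul (hcolon mul I S) /\ alpha_prime mul alpha (hcolon mul I S).
Proof.
move=> [Hex [Hass [Hdl [Hdr [Hnr Hnl]]]]] Hcom _ _ _ [[x0 Ix0] [Isub Iabs]] Hap.
have I0 : I 0 by rewrite -(subrr x0); apply: Isub.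
have IN : forall a, I a -> I (- a) by move=> a Ia; rewrite -sub0r; apply: Isub.
have ID : forall a b, I a -> I b -> I (a + b).
  by move=> a b Ia Ib; rewrite -(opprK b); apply: Isub => //; apply: IN.
have IC : forall a, I a -> hcolon mul I S a.
  by move=> a Ia s _ z /Hcom; apply: Iabs.
split; last first.
  move=> x y Hxy.
  case: (classic (hcolon mul I S x)) => [H|H]; first by left.
  right; apply: IC.
  have [s Hs] := not_all_ex_not _ _ H.
  have [Ss Hs'] := imply_to_and _ _ Hs.
  have [w Hw] := not_all_ex_not _ _ Hs'.
  have [ws nIw] := imply_to_and _ _ Hw.
  case: (Hap w y) => // z zwy.
  have : setmul mul (mul x s) (single y) z by exists w, y.
  move/(Hass x s y) => [x' [b [-> [bsy zxb]]]].
  have : setmul mul (single x) (mul y s) z by exists x, b; split => //; split => //; apply/Hcom.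
  move/(Hass x y s) => [a [s' [axy [-> zas]]]].
  exact: (Hxy a axy s Ss z zas).
split; first by exists x0; apply: IC.
split.
  move=> x y Hx Hy s Ss z /Hdr [a [b [ha [hb ->]]]].
  apply: ID; first exact: (Hx s Ss).
  move: hb => /Hnl hb; rewrite -(opprK b); apply: IN; exact: (Hy s Ss).
move=> r x Hx z zrx s Ss w wzs.
have : setmul mul (mul r x) (single s) w by exists z, s.
move/(Hass r x s) => [r' [b [-> [bxs wrb]]]].
exact: (Iabs _ b (Hx s Ss b bxs) w wrb).
Qed.
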